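(* For every integer $n\ge 0$, \[ \sum_{k=0}^{n}(-4)^k\frac{\binom{n}{k}}{\binom{1+2k}{k}}\,k\,H_{1+2k} =\frac{2n\{H_{n}-2H_{1+2n}\}}{(4n^2-1)(2n-3)}+\frac{2n(8n^4+20n^3-2n^2-53n+8)}{(4n^2-1)^2(2n-3)^2}. \]
   Context: For an integer $m\ge 0$, $H_m$ denotes the $m$-th harmonic number: $H_0=0$ and $H_m=\sum_{j=1}^m \frac1j$ for $m\ge1$. $\binom{n}{k}$ is the usual binomial coefficient. *)

(* Defs.v *)
From HB Require Import structures.
From mathcomp Require Import all_boot all_order all_algebra.
Set Implicit Arguments. Unset Strict Implicit. Unset Printing Implicit Defensive.
Import Order.TTheory GRing.Theory Num.Theory.
Local Open Scope ring_scope.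

Definition harmonic (m : nat) : rat := \sum_(1 <= j < m.+1) (j%:R)^-1.

(* Main.v *)
Require Import Defs.
From HB Require Import structures.
From mathcomp Require Import all_boot all_order all_algebra.
From mathcomp Require Import ring lra zify.
Import Order.TTheory GRing.Theory Num.Theory.
Local Open Scope ring_scope.

Lemma natne (a b : nat) : (a != b)%N -> (a%:R - b%:R : rat) != 0.
Proof. by move=> h; rewrite subr_eq0 eqr_nat. Qed.

Lemma binR_down (n k : nat) :
  ('C(n.+1, k)%:R * ((n.+1)%:R - k%:R) : rat) = (n.+1)%:R * 'C(n, k)%:R.
Proof.
case: (leqP k n.+1) => hk.
  by rewrite -natrB // -!natrM mulnC -mul_bin_down.
by rewrite !bin_small ?mul0r ?mulr0 //; lia.
Qed.

Lemma binR_diag (n k : nat) :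
  ('C(n.+1, k.+1)%:R * (k.+1)%:R : rat) = (n.+1)%:R * 'C(n, k)%:R.
Proof. by rewrite -!natrM mulnC -(mul_bin_diag n.+1 k). Qed.

Lemma binR_left (m k : nat) :
  ('C(m, k.+1)%:R * (k.+1)%:R : rat) = (m%:R - k%:R) * 'C(m, k)%:R.
Proof.
case: (leqP k m) => hk.
  by rewrite -natrB // -!natrM mulnC mul_bin_left.
by rewrite !bin_small ?mul0r ?mulr0 //; lia.
Qed.

Definition u (k : nat) : rat := (-4) ^+ k / 'C(1 + 2 * k, k)%:R.

Lemma binC_neq0 k : ('C(1 + 2 * k, k)%:R : rat) != 0.
Proof. by rewrite pnatr_eq0 -lt0n bin_gt0; lia. Qed.

Lemma uS k : u k.+1 * (2 * k%:R + 3) = -2 * (k%:R + 2) * u k.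
Proof.
rewrite /u.
have e1 : (1 + 2 * k.+1 = (1 + 2 * k).+2)%N by lia.
rewrite e1.
have ha := binR_diag (1 + 2 * k).+1 k.
have hb := binR_left (1 + 2 * k).+1 k.
have hc := binR_diag (1 + 2 * k) k.
have hd := binC_neq0 k.
have ha0 : ('C((1 + 2 * k).+2, k.+1)%:R : rat) != 0 by rewrite pnatr_eq0 -lt0n bin_gt0; lia.
have E1 : ((k.+1)%:R : rat) = k%:R + 1 by rewrite natr1.
have E2 : (((1 + 2 * k).+2)%:R : rat) = 2 * k%:R + 3.
  have -> : ((1 + 2 * k).+2 = 2 * k + 3)%N by lia.
  by rewrite natrD natrM.
have E3 : (((1 + 2 * k).+1)%:R : rat) = 2 * k%:R + 2.
  have -> : ((1 + 2 * k).+1 = 2 * k + 2)%N by lia.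
  by rewrite natrD natrM.
rewrite E1 E2 in ha; rewrite E1 E3 in hb hc.
move: ha hb hc hd ha0.
set a := 'C(_.+2, k.+1)%:R.
set b := 'C((1 + 2 * k).+1, k)%:R.
set c := 'C((1 + 2 * k).+1, k.+1)%:R.
set d := 'C(1 + 2 * k, k)%:R.
move=> ha hb hc hd ha0.
have key : a * (k%:R + 2) = 2 * (2 * k%:R + 3) * d.
  have hk1 : (k%:R + 1 : rat) != 0 by rewrite natr1 pnatr_eq0.
  apply: (mulIf hk1); apply: (mulIf hk1).
  have -> : a * (k%:R + 2) * (k%:R + 1) * (k%:R + 1) = (a * (k%:R + 1)) * (k%:R + 2) * (k%:R + 1) by ring.
  rewrite ha.
  have -> : (2 * k%:R + 3) * b * (k%:R + 2) * (k%:R + 1) = (2 * k%:R + 3) * (k%:R + 1) * ((2 * k%:R + 2 - k%:R) * b) by ring.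
  rewrite -hb hc; ring.
rewrite exprS.
apply: (mulIf hd); apply: (mulIf ha0).
set X := (-4 : rat) ^+ k.
have -> : -4 * X / a * (2 * k%:R + 3) * d * a = -4 * X * (2 * k%:R + 3) * d by field.
have -> : -2 * (k%:R + 2) * (X / d) * d * a = -2 * X * (a * (k%:R + 2)) by field.
rewrite key; ring.
Qed.

Lemma eq_via (x y c a b : rat) : a = b -> x - y = c * (a - b) -> x = y.
Proof. by move=> -> h; apply/eqP; rewrite -subr_eq0 h subrr mulr0. Qed.

Lemma posnz (x : rat) : 0 < x -> x != 0. Proof. exact: lt0r_neq0. Qed.

Definition t (m k : nat) : rat := 'C(m, k)%:R * u k.

Lemma t_small m k : (m < k)%N -> t m k = 0.
Proof. by move=> h; rewrite /t bin_small // mul0r. Qed.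

Lemma sum_ext (F : nat -> rat) m : F m.+1 = 0 ->
  \sum_(0 <= k < m.+2) F k = \sum_(0 <= k < m.+1) F k.
Proof. by move=> h; rewrite big_nat_recr //= h addr0. Qed.

Definition G0 (m k : nat) : rat :=
  - t m.+1 k * k%:R * (2 * k%:R + 1) / ((m%:R + 1) * (2 * m%:R + 3)).

Lemma G0step m k :
  t m.+1 k - (2 * m%:R - 1) / (2 * m%:R + 3) * t m k = G0 m k.+1 - G0 m k.
Proof.
have hm1 : (m%:R + 1 : rat) != 0 by apply: posnz; have := ler0n rat m; lra.
have hm3 : (2 * m%:R + 3 : rat) != 0 by apply: posnz; have := ler0n rat m; lra.
have -> : G0 m k.+1 = - ('C(m.+1, k.+1)%:R * (k.+1)%:R) * (u k.+1 * (2 * k%:R + 3))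
      / ((m%:R + 1) * (2 * m%:R + 3)) by rewrite /G0 /t; ring.
rewrite binR_diag uS /G0 /t.
apply: (@eq_via _ _ (u k * (2 * m%:R + 2 * k%:R + 3) / ((m%:R + 1) * (2 * m%:R + 3))) _ _ (binR_down m k)).
by field; rewrite ?hm1 ?hm3.
Qed.

Lemma nz4 (m : nat) : (4 * m%:R ^+ 2 - 1 : rat) != 0.
Proof.
have -> : (4 * m%:R ^+ 2 - 1 : rat) = (4 * m ^ 2)%:R - 1%:R by rewrite natrM natrX.
apply: natne; nia.
Qed.

Lemma W0 m : \sum_(0 <= k < m.+1) t m k = -1 / (4 * m%:R ^+ 2 - 1).
Proof.
elim: m => [|m IH].
  have := nz4 0; rewrite big_nat1 /t /u /= !bin0 expr0 => h; field; exact: h.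
have hm3 : (2 * m%:R + 3 : rat) != 0 by apply: posnz; have := ler0n rat m; lra.
have hm1 : (m%:R + 1 : rat) != 0 by apply: posnz; have := ler0n rat m; lra.
have tel := @telescope_sumr_eq _ 0 m.+2 (G0 m) (fun k => t m.+1 k - (2 * m%:R - 1) / (2 * m%:R + 3) * t m k) (leq0n _) (fun k _ => G0step m k).
rewrite sumrB -mulr_sumr [X in _ * X]sum_ext ?t_small // IH in tel.
have e0 : G0 m 0 = 0 by rewrite /G0; ring.
have e2 : G0 m m.+2 = 0 by rewrite /G0 t_small //; ring.
rewrite e0 e2 subrr in tel.
move/eqP: tel; rewrite subr_eq0 => /eqP ->.
have h1 := nz4 m; have h2 : (4 * (1 + m%:R) ^+ 2 - 1 : rat) != 0 by rewrite nat1r; exact: nz4.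

by field; rewrite h1 h2 hm3.
Qed.

Definition cb1 (m : nat) : rat := 4 / (5 - 2 * m%:R).
Definition cb0 (m : nat) : rat := (30 * m%:R - 31) / ((5 - 2 * m%:R) * (3 - 2 * m%:R)).
Definition cc (m : nat) : rat := -1 + 4 * m%:R * cb1 m + 4 * m%:R * cb0 m.
Definition B (m j : nat) : rat := t m j * j%:R * (2 * j%:R + 1) * (cb1 m * j%:R + cb0 m).

Lemma nz5 (m : nat) : (5 - 2 * m%:R : rat) != 0.
Proof.
have -> : (5 - 2 * m%:R : rat) = 5%:R - (2 * m)%:R by rewrite natrM.
apply: natne; lia.
Qed.

Lemma nz3 (m : nat) : (3 - 2 * m%:R : rat) != 0.
Proof.
have -> : (3 - 2 * m%:R : rat) = 3%:R - (2 * m)%:R by rewrite natrM.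
apply: natne; lia.
Qed.

Lemma Bstep m j :
  t m j * (4 * j%:R ^+ 2 - 3 * j%:R - 1) = cc m * t m j + (B m j.+1 - B m j).
Proof.
have hb1 : cb1 m * (5 - 2 * m%:R) = 4.
  by rewrite /cb1; have h5 := nz5 m; field.
have hb0 : cb1 m * (4 - 6 * m%:R) + cb0 m * (3 - 2 * m%:R) = -3.
  rewrite /cb1 /cb0; have h5 := nz5 m; have h3 := nz3 m.
  by field; rewrite h5 h3.
have hB1 := binR_left m j; have hu := uS j.
rewrite /B /cc /t.
move: hb1 hb0 hB1 hu.
move: (cb1 m) (cb0 m) ('C(m, j.+1)%:R) ('C(m, j)%:R) (u j.+1) (u j) => b1 b0 C1 C0 u1 u0.
move=> hb1 hb0 hB1 hu.
have -> : C1 * u1 * (j.+1)%:R * (2 * (j.+1)%:R + 1) * (b1 * (j.+1)%:R + b0)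
   = (C1 * (j.+1)%:R) * (u1 * (2 * j%:R + 3)) * (b1 * (j%:R + 1) + b0) by ring.
rewrite hB1 hu.
apply: (@eq_via _ _ (- (C0 * u0 * j%:R)) _ _ hb0).
apply: (@eq_via _ _ (- (C0 * u0 * j%:R ^+ 2)) _ _ hb1).
ring.
Qed.

Lemma Vsum m : \sum_(0 <= j < m.+1) t m j * (4 * j%:R ^+ 2 - 3 * j%:R - 1)
   = cc m * (-1 / (4 * m%:R ^+ 2 - 1)).
Proof.
under eq_bigr do rewrite Bstep.
rewrite big_split /= -mulr_sumr W0 telescope_sumr //.
have e0 : B m 0 = 0 by rewrite /B mulr0 !mul0r.
have e1 : B m m.+1 = 0 by rewrite /B t_small // !mul0r.
by rewrite e0 e1 subrr addr0.
Qed.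

Lemma harmS m : harmonic m.+1 = harmonic m + ((m.+1)%:R)^-1.
Proof. by rewrite /harmonic big_nat_recr. Qed.

Definition f (n k : nat) : rat := 'C(n, k)%:R * u k * k%:R * harmonic (1 + 2 * k).
Definition DD (n : nat) : rat := n%:R * (2 * n%:R + 3).
Definition al (n : nat) : rat := (n%:R + 1) * (2 * n%:R - 3) / DD n.
Definition G (n k : nat) : rat :=
  - t n.+1 k * k%:R * (k%:R - 1) * (2 * k%:R + 1) / DD n.
Definition qq (n j : nat) : rat := (4 * j%:R ^+ 2 - 3 * j%:R - 1) / (2 * DD n).

Lemma hstep n k : n != 0%N ->
  t n.+1 k * k%:R - al n * (t n k * k%:R) = G n k.+1 - G n k.
Proof.
move=> hn.
have hn0 : (n%:R : rat) != 0 by rewrite pnatr_eq0.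
have hn3 : (2 * n%:R + 3 : rat) != 0 by apply: posnz; have := ler0n rat n; lra.
have -> : G n k.+1 = - ('C(n.+1, k.+1)%:R * (k.+1)%:R) * (u k.+1 * (2 * k%:R + 3))
      * k%:R / DD n by rewrite /G /t; ring.
rewrite binR_diag uS /G /t /al /DD.
apply: (@eq_via _ _ (u k * k%:R * (2 * n%:R + 2 * k%:R + 1) / (n%:R * (2 * n%:R + 3))) _ _ (binR_down n k)).
by field; rewrite hn0 hn3.
Qed.

Lemma fstep n k : n != 0%N ->
  f n.+1 k - al n * f n k =
  (G n k.+1 * harmonic (1 + 2 * k.+1) - G n k * harmonic (1 + 2 * k))
  + t n.+1 k.+1 * qq n k.+1.
Proof.
move=> hn.
have hn0 : (n%:R : rat) != 0 by rewrite pnatr_eq0.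
have hn3 : (2 * n%:R + 3 : rat) != 0 by apply: posnz; have := ler0n rat n; lra.
have E2 : (((1 + 2 * k).+2)%:R : rat) = 2 * k%:R + 3.
  have -> : ((1 + 2 * k).+2 = 2 * k + 3)%N by lia.
  by rewrite natrD natrM.
have E3 : (((1 + 2 * k).+1)%:R : rat) = 2 * k%:R + 2.
  have -> : ((1 + 2 * k).+1 = 2 * k + 2)%N by lia.
  by rewrite natrD natrM.
have eh : harmonic (1 + 2 * k.+1) = harmonic (1 + 2 * k)
    + (2 * k%:R + 2)^-1 + (2 * k%:R + 3)^-1.
  rewrite (_ : (1 + 2 * k.+1 = (1 + 2 * k).+2)%N); last by lia.
  by rewrite harmS harmS E2 E3.
have hk1 : (2 * k%:R + 2 : rat) != 0 by apply: posnz; have := ler0n rat k; lra.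
have hk2 : (2 * k%:R + 3 : rat) != 0 by apply: posnz; have := ler0n rat k; lra.
have hL : t n.+1 k.+1 * qq n k.+1 = - G n k.+1 * ((2 * k%:R + 2)^-1 + (2 * k%:R + 3)^-1).
  rewrite /qq /G /DD.
  move: (t n.+1 k.+1) => T.
  by field; rewrite ?hk1 ?hk2 ?hn0 ?hn3.
rewrite eh hL.
have hs := hstep n k hn.
move: hs; rewrite /f /t.
move: (G n k.+1) (G n k) (al n) (harmonic (1 + 2 * k)) ((2 * k%:R + 2)^-1) ((2 * k%:R + 3)^-1) => g1 g0 a h x y hs.
apply: (@eq_via _ _ h _ _ hs).
ring.
Qed.

Definition S (n : nat) : rat := \sum_(0 <= k < n.+1) f n k.

Lemma t0 m : t m 0 = 1.
Proof. by rewrite /t /u bin0 expr0 (_ : (1 + 2 * 0 = 1)%N) // bin0 divr1 mul1r. Qed.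

Lemma Srec n : n != 0%N ->
  S n.+1 - al n * S n = (cc n.+1 * (-1 / (4 * (n.+1)%:R ^+ 2 - 1)) + 1) / (2 * DD n).
Proof.
move=> hn.
have hn0 : (n%:R : rat) != 0 by rewrite pnatr_eq0.
have hn3 : (2 * n%:R + 3 : rat) != 0 by apply: posnz; have := ler0n rat n; lra.
have e1 : S n.+1 - al n * S n = \sum_(0 <= k < n.+2) (f n.+1 k - al n * f n k).
  rewrite sumrB -mulr_sumr /S [in RHS](sum_ext (f n)) //.
  by rewrite /f bin_small // !mul0r.
rewrite e1.
under eq_bigr do rewrite fstep //.
rewrite big_split /=.
rewrite (@telescope_sumr _ 0 n.+2 (fun k => G n k * harmonic (1 + 2 * k))) //.
have g0 : G n 0 = 0 by rewrite /G !mulr0 !mul0r.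
have g2 : G n n.+2 = 0 by rewrite /G t_small // oppr0 !mul0r.
rewrite g0 g2 !mul0r subrr add0r.
have h := @big_nat_recl rat 0 +%R n.+2 0 (fun j => t n.+1 j * qq n j) (leq0n _).
rewrite [X in X = _]sum_ext in h; last by rewrite t_small // mul0r.
have -> : \sum_(0 <= i < n.+2) t n.+1 i.+1 * qq n i.+1 =
  \sum_(0 <= i < n.+2) t n.+1 i * qq n i - t n.+1 0 * qq n 0 by rewrite h addrC addKr.
rewrite /qq; under eq_bigr do rewrite mulrA. rewrite -mulr_suml Vsum t0.
have hD : (DD n) != 0 by rewrite /DD mulf_neq0.
have hq := nz4 n.+1. move: (DD n) hD (cc n.+1) (4 * (n.+1)%:R ^+ 2 - 1) hq => D hD c q hq.
by field; rewrite hD hq.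
Qed.

Definition R (n : nat) : rat :=
  (2 * n%:R * (harmonic n - 2 * harmonic (1 + 2 * n)%N))
      / ((4 * n%:R ^+ 2 - 1) * (2 * n%:R - 3))
    + (2 * n%:R * (8 * n%:R ^+ 4 + 20 * n%:R ^+ 3 - 2 * n%:R ^+ 2 - 53 * n%:R + 8))
      / ((4 * n%:R ^+ 2 - 1) ^+ 2 * (2 * n%:R - 3) ^+ 2).

Lemma nz2 (m : nat) : (2 * m%:R - 3 : rat) != 0.
Proof.
have -> : (2 * m%:R - 3 : rat) = (2 * m)%:R - 3%:R by rewrite natrM.
apply: natne; lia.
Qed.

Lemma Rrec n : n != 0%N ->
  R n.+1 - al n * R n = (cc n.+1 * (-1 / (4 * (n.+1)%:R ^+ 2 - 1)) + 1) / (2 * DD n).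
Proof.
move=> hn.
have E2 : (((1 + 2 * n).+2)%:R : rat) = 2 * n%:R + 3.
  have -> : ((1 + 2 * n).+2 = 2 * n + 3)%N by lia.
  by rewrite natrD natrM.
have E3 : (((1 + 2 * n).+1)%:R : rat) = 2 * n%:R + 2.
  have -> : ((1 + 2 * n).+1 = 2 * n + 2)%N by lia.
  by rewrite natrD natrM.
have eh : harmonic (1 + 2 * n.+1) = harmonic (1 + 2 * n)
    + (2 * n%:R + 2)^-1 + (2 * n%:R + 3)^-1.
  rewrite (_ : (1 + 2 * n.+1 = (1 + 2 * n).+2)%N); last by lia.
  by rewrite harmS harmS E2 E3.
rewrite /R eh harmS /al /DD /cc /cb1 /cb0.
move: (harmonic n) (harmonic (1 + 2 * n)) => h1 h2.
have a1 : (2 * n%:R + 3 : rat) != 0 by apply: posnz; have := ler0n rat n; lra.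
have a2 : (n%:R : rat) != 0 by rewrite pnatr_eq0.
have a3 : (4 * (1 + n%:R) ^+ 2 - 1 : rat) != 0 by rewrite nat1r nz4.
have a4 : (3 - 2 * (1 + n%:R) : rat) != 0 by rewrite nat1r nz3.
have a5 : (5 - 2 * (1 + n%:R) : rat) != 0 by rewrite nat1r nz5.
have a6 : (2 * n%:R - 3 : rat) != 0 by rewrite nz2.
have a7 : (4 * n%:R ^+ 2 - 1 : rat) != 0 by rewrite nz4.
have a8 : (2 * (1 + n%:R) - 3 : rat) != 0 by rewrite nat1r nz2.
have a9 : (2 * n%:R + 2 : rat) != 0 by apply: posnz; have := ler0n rat n; lra.
have a10 : (1 + n%:R : rat) != 0 by apply: posnz; have := ler0n rat n; lra.
by field; rewrite a1 a2 a3 a4 a5 a6 a7 a8 a9 a10.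
Qed.

Lemma SR n : S n = R n.
Proof.
elim: n => [|n IH].
  by rewrite /S big_nat1 /f /R !mulr0 !mul0r addr0.
case: n IH => [|n] IH.
  have H0 : harmonic 0 = 0 by rewrite /harmonic big_geq.
  rewrite /S /R /f big_nat_recr //= big_nat1.
  rewrite (_ : (1 + 2 * 1 = 3)%N) // (_ : (1 + 2 * 0 = 1)%N) // !harmS H0 /u /=.
  rewrite !bin0 binn (_ : 'C(1 + 2 * 1, 1) = 3) // expr0 expr1.
have hS := Srec n.+1 isT.
have hR := Rrec n.+1 isT.
rewrite IH -hR in hS.
by move/(congr1 (fun x => x + al n.+1 * R n.+1)): hS; rewrite !subrK.
Qed.

Theorem theorem5 (n : nat) :
  \sum_(0 <= k < n.+1)
     (-4 : rat) ^+ k * ('C(n, k)%:R / 'C(1 + 2 * k, k)%:R) * k%:R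
       * harmonic (1 + 2 * k)%N
  = (2 * n%:R * (harmonic n - 2 * harmonic (1 + 2 * n)%N))
      / ((4 * n%:R ^+ 2 - 1) * (2 * n%:R - 3))
    + (2 * n%:R * (8 * n%:R ^+ 4 + 20 * n%:R ^+ 3 - 2 * n%:R ^+ 2 - 53 * n%:R + 8))
      / ((4 * n%:R ^+ 2 - 1) ^+ 2 * (2 * n%:R - 3) ^+ 2).
Proof.
transitivity (S n); last exact: SR.
rewrite /S.
apply: eq_bigr => k _.
rewrite /f /u.
move: ((-4 : rat) ^+ k) ('C(n, k)%:R) ('C(1 + 2 * k, k)%:R) (k%:R : rat) (harmonic (1 + 2 * k)) => a b c d e.
by rewrite !mulrA [a * b]mulrC.
Qed.
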